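(* Let $(R,\mathfrak{m})$ be a commutative Artinian local ring with identity, $\mathfrak{m}\neq0$ and $\mathfrak{m}^2=0$. For every positive integer $n$, $n-1\notin L(x^n)$; and if $n$ is odd, then $2\notin L(x^n)$.
   Context: A nonunit polynomial in $R[x]$ is irreducible if in any factorization into two polynomials one factor is a unit of $R[x]$. A positive integer $k$ is a length of $f\in R[x]$ if $f$ is a product of $k$ irreducible polynomials of $R[x]$; $L(f)$ denotes the set of lengths of $f$. *)

(* Defs.v *)
From HB Require Import structures.
From mathcomp Require Import all_boot all_order all_algebra.
Set Implicit Arguments. Unset Strict Implicit. Unset Printing Implicit Defensive.
Import GRing.Theory.
Local Open Scope ring_scope.

Section Ideals.
Variable R : comUnitRingType.

Definition is_ideal (I : R -> Prop) : Prop :=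
  [/\ I 0, (forall x y, I x -> I y -> I (x + y)),
      (forall x, I x -> I (- x)) & (forall r x, I x -> I (r * x))].

Definition is_max_ideal (I : R -> Prop) : Prop :=
  [/\ is_ideal I, ~ I 1 &
      (forall J, is_ideal J -> (forall x, I x -> J x) -> ~ J 1 ->
         forall x, J x -> I x)].

Definition local_with_max (m : R -> Prop) : Prop :=
  is_max_ideal m /\ (forall J, is_max_ideal J -> forall x, J x <-> m x).

Definition artinian : Prop :=
  forall I : nat -> R -> Prop, (forall n, is_ideal (I n)) ->
    (forall n x, I n.+1 x -> I n x) ->
    exists N, forall n, (N <= n)%N -> forall x, I n x <-> I N x.

End Ideals.

Section Lengths.
Variable R : comUnitRingType.

Definition poly_unit (p : {poly R}) : Prop := exists q : {poly R}, p * q = 1.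

Definition poly_irr (f : {poly R}) : Prop :=
  ~ poly_unit f /\
  (forall g h : {poly R}, f = g * h -> poly_unit g \/ poly_unit h).

Definition is_length (f : {poly R}) (k : nat) : Prop :=
  (0 < k)%N /\ exists s : seq {poly R},
    [/\ size s = k, (forall p, p \in s -> poly_irr p) & f = \prod_(p <- s) p].

End Lengths.

(* Main.v *)
Require Import Defs.
From HB Require Import structures.
From mathcomp Require Import all_boot all_order all_algebra.
From mathcomp Require Import ring zify.
Import GRing.Theory.
Local Open Scope ring_scope.

Section Work.
Variable R : comUnitRingType.
Variable m : R -> Prop.
Hypothesis Hmax : is_max_ideal m.
Hypothesis Hsq : forall x y, m x -> m y -> x * y = 0.

Lemma m0 : m 0. Proof. by case: Hmax => -[]. Qed.
Lemma mD x y : m x -> m y -> m (x + y). Proof. by case: Hmax => -[] _ h _ _ _ _; apply: h. Qed.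
Lemma mN x : m x -> m (- x). Proof. by case: Hmax => -[] _ _ h _ _ _; apply: h. Qed.
Lemma mMl r x : m x -> m (r * x). Proof. by case: Hmax => -[] _ _ _ h _ _; apply: h. Qed.
Lemma mMr r x : m x -> m (x * r). Proof. by move=> h; rewrite mulrC; apply: mMl. Qed.
Lemma m1 : ~ m 1. Proof. by case: Hmax. Qed.

Lemma m_nunit u : m u -> u \isn't a GRing.unit.
Proof.
move=> mu; apply/negP => Uu; apply: m1.
by rewrite -(mulVr Uu); apply: mMl.
Qed.

Lemma one_sub_unit t : m t -> (1 - t) \is a GRing.unit.
Proof.
move=> mt; apply/unitrPr; exists (1 + t).
have h : (1 + t) * (1 - t) = 1 - t * t by ring.
by rewrite mulrC h Hsq // subr0.
Qed.

Lemma unit_or_m x : x \is a GRing.unit \/ m x.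
Proof.
case Ux: (x \is a GRing.unit); first by left.
right.
pose J := fun y => exists t r, m t /\ y = t + r * x.
have IJ : is_ideal J.
  split.
  - by exists 0, 0; rewrite mul0r addr0; split => //; apply: m0.
  - move=> y z [t1 [r1 [h1 ->]]] [t2 [r2 [h2 ->]]].
    exists (t1 + t2), (r1 + r2); split; [exact: mD|ring].
  - move=> y [t1 [r1 [h1 ->]]]; exists (- t1), (- r1); split; [exact: mN|ring].
  - move=> r y [t1 [r1 [h1 ->]]]; exists (r * t1), (r * r1); split; [exact: mMl|ring].
case: Hmax => _ _ /(_ J IJ) H.
apply: H.
- by move=> y my; exists y, 0; rewrite mul0r addr0.
- move=> [t [r [mt e]]].
  have : (r * x) \is a GRing.unit.
    have -> : r * x = 1 - t by rewrite e; ring.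
    exact: one_sub_unit.
  by rewrite unitrM Ux andbF.
- by exists 0, 1; rewrite mul1r add0r; split => //; apply: m0.
Qed.

Lemma nunit_m x : x \isn't a GRing.unit -> m x.
Proof. by case: (unit_or_m x) => // ->. Qed.

Lemma unitDm u t : u \is a GRing.unit -> m t -> (u + t) \is a GRing.unit.
Proof.
move=> Uu mt; case: (unit_or_m (u + t)) => // h.
have e : u = (u + t) + - t by ring.
have : m u by rewrite e; apply: mD => //; apply: mN.
by move/m_nunit; rewrite Uu.
Qed.

Lemma m_sum n (F : 'I_n -> R) : (forall i, m (F i)) -> m (\sum_(i < n) F i).
Proof. by move=> h; apply: (big_ind m) => //; [apply: m0|apply: mD]. Qed.


Lemma m_big (I : Type) (r : seq I) (P : pred I) (F : I -> R) :
  (forall i, P i -> m (F i)) -> m (\sum_(i <- r | P i) F i).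
Proof. by move=> h; apply: (big_ind m) => //; [apply: m0|apply: mD]. Qed.

Definition isu (c : R) := c \is a GRing.unit.
Definition nn (p : {poly R}) := has isu p.
Definition ord (p : {poly R}) := find isu p.
Definition top (p : {poly R}) := (\max_(j < size p | isu p`_j) (j : nat))%N.

Lemma unit_lt_size (p : {poly R}) j : isu p`_j -> (j < size p)%N.
Proof.
rewrite ltnNge; apply: contraL => h.
by rewrite nth_default // /isu unitr0.
Qed.

Lemma nnP (p : {poly R}) : nn p <-> exists j, isu p`_j.
Proof.
split.
  by case/(has_nthP 0) => j _ h; exists j.
by case=> j h; apply/(has_nthP 0); exists j => //; apply: unit_lt_size.
Qed.

Lemma nn_m (p : {poly R}) : ~~ nn p -> forall j, m p`_j.
Proof.
move=> h j; apply: nunit_m; apply/negP => u.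
by move/negP: h; apply; apply/nnP; exists j.
Qed.

Lemma m_nn (p : {poly R}) : (forall j, m p`_j) -> ~~ nn p.
Proof.
move=> h; apply/negP => /nnP [j u].
by move: (m_nunit _ (h j)) => /negP; apply.
Qed.

Lemma ord_unit (p : {poly R}) : nn p -> isu p`_(ord p).
Proof. exact: nth_find. Qed.

Lemma ord_before (p : {poly R}) j : (j < ord p)%N -> m p`_j.
Proof. by move=> h; apply: nunit_m; move: (before_find 0 h); rewrite /isu => ->. Qed.

Lemma ord_le (p : {poly R}) j : isu p`_j -> (ord p <= j)%N.
Proof.
move=> u; rewrite leqNgt; apply/negP => h.
by move: (before_find 0 h) u; rewrite /isu => ->.
Qed.

Lemma ord_eq (p : {poly R}) a : isu p`_a -> (forall j, (j < a)%N -> m p`_j) -> ord p = a.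
Proof.
move=> u h; apply/eqP; rewrite eqn_leq ord_le // leqNgt; apply/negP => lt.
have nnp : nn p by apply/nnP; exists a.
by move: (m_nunit _ (h _ lt)) => /negP; apply; apply: ord_unit.
Qed.

Lemma top_ge (p : {poly R}) j : isu p`_j -> (j <= top p)%N.
Proof.
move=> u; have lt := unit_lt_size _ _ u.
exact: (@leq_bigmax_cond _ (fun i : 'I_(size p) => isu p`_i) (fun i => nat_of_ord i) (Ordinal lt)).
Qed.

Lemma top_unit (p : {poly R}) : nn p -> isu p`_(top p).
Proof.
case/nnP => j u; have lt := unit_lt_size _ _ u.
rewrite /top (bigmax_eq_arg (Ordinal lt)) //.
by case: arg_maxnP.
Qed.

Lemma top_after (p : {poly R}) j : (top p < j)%N -> m p`_j.
Proof.
move=> h; apply: nunit_m; apply/negP => u.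
by move: (top_ge _ _ u); rewrite leqNgt h.
Qed.

Lemma top_eq (p : {poly R}) t : isu p`_t -> (forall j, (t < j)%N -> m p`_j) -> top p = t.
Proof.
move=> u h; apply/eqP; rewrite eqn_leq top_ge // andbT leqNgt; apply/negP => lt.
have nnp : nn p by apply/nnP; exists t.
by move: (m_nunit _ (h _ lt)) => /negP; apply; apply: top_unit.
Qed.


Lemma mul_ord (p q : {poly R}) : nn p -> nn q ->
  nn (p * q) /\ ord (p * q) = (ord p + ord q)%N.
Proof.
move=> np nq; set a := ord p; set b := ord q.
have U : isu (p * q)`_(a + b).
  have lt : (a < (a + b).+1)%N by rewrite ltnS leq_addr.
  rewrite coefM (bigD1 (Ordinal lt)) //= addKn.
  apply: unitDm; first by rewrite unitrM; apply/andP; split; apply: ord_unit.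
  apply: m_big => i /= ne; case: (ltngtP i a) => [lt'|gt|eq].
  - by apply: mMr; apply: ord_before.
  - apply: mMl; apply: ord_before; have := ltn_ord i; rewrite -/b; lia.
  - by case/eqP: ne; apply: val_inj.
have L : forall j, (j < a + b)%N -> m (p * q)`_j.
  move=> j lt; rewrite coefM; apply: m_big => i _; case: (ltnP i a) => h.
  - by apply: mMr; apply: ord_before.
  - apply: mMl; apply: ord_before; have := ltn_ord i; rewrite -/b; lia.
split; [by apply/nnP; exists (a + b) | exact: ord_eq].
Qed.

Lemma mul_top (p q : {poly R}) : nn p -> nn q -> top (p * q) = (top p + top q)%N.
Proof.
move=> np nq; set a := top p; set b := top q.
have U : isu (p * q)`_(a + b).
  have lt : (a < (a + b).+1)%N by rewrite ltnS leq_addr.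
  rewrite coefM (bigD1 (Ordinal lt)) //= addKn.
  apply: unitDm; first by rewrite unitrM; apply/andP; split; apply: top_unit.
  apply: m_big => i /= ne; case: (ltngtP i a) => [lt'|gt|eq].
  - apply: mMl; apply: top_after; have := ltn_ord i; rewrite -/b; lia.
  - by apply: mMr; apply: top_after.
  - by case/eqP: ne; apply: val_inj.
apply: top_eq => // j lt; rewrite coefM; apply: m_big => i _; case: (leqP i a) => h.
- apply: mMl; apply: top_after; have := ltn_ord i; rewrite -/b; lia.
- by apply: mMr; apply: top_after.
Qed.

Lemma null_mul (p q : {poly R}) : ~~ nn p -> ~~ nn (p * q).
Proof.
move=> h; apply: m_nn => j; rewrite coefM; apply: m_big => i _.
by apply: mMr; apply: nn_m.
Qed.

Lemma nn1 : nn 1 /\ ord 1 = 0%N /\ top 1 = 0%N.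
Proof.
have u : isu (1 : {poly R})`_0 by rewrite coef1 /isu unitr1.
split; first by apply/nnP; exists 0%N.
split; first by apply: ord_eq.
apply: top_eq => // j lt; rewrite coef1; case: j lt => // j _; exact: m0.
Qed.

Lemma prod_nn (s : seq {poly R}) : (forall p, p \in s -> nn p) ->
  [/\ nn (\prod_(p <- s) p), ord (\prod_(p <- s) p) = (\sum_(p <- s) ord p)%N
    & top (\prod_(p <- s) p) = (\sum_(p <- s) top p)%N].
Proof.
elim: s => [|p s IH] h.
  by rewrite !big_nil; case: nn1 => a [b c].
have hp : nn p by apply: h; rewrite inE eqxx.
have [n1 o1 t1] : [/\ nn (\prod_(p <- s) p), ord (\prod_(p <- s) p) = (\sum_(p <- s) ord p)%N
    & top (\prod_(p <- s) p) = (\sum_(p <- s) top p)%N].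
  by apply: IH => q qs; apply: h; rewrite inE qs orbT.
rewrite !big_cons; case: (mul_ord _ _ hp n1) => n2 o2.
by split => //; rewrite ?o2 ?o1 // (mul_top _ _ hp n1) t1.
Qed.

Lemma prod_null (s : seq {poly R}) p : p \in s -> ~~ nn p -> ~~ nn (\prod_(q <- s) q).
Proof. by move=> ps h; rewrite (big_rem _ ps) /=; apply: null_mul. Qed.


Lemma punit_ord (p : {poly R}) : Defs.poly_unit p -> nn p /\ ord p = 0%N.
Proof.
case=> q e.
have n1 := nn1; case: n1 => n1 [o1 _].
have np : nn p by case E: (nn p) => //; move: (null_mul _ q (negbT E)); rewrite e n1.
have nq : nn q by case E: (nn q) => //; move: (null_mul _ p (negbT E)); rewrite mulrC e n1.
split => //; case: (mul_ord _ _ np nq) => _; rewrite e o1; lia.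
Qed.

Lemma mono_unit (p : {poly R}) : nn p -> ord p = 0%N -> top p = 0%N -> Defs.poly_unit p.
Proof.
move=> np o t.
set c := p`_0.
have uc : c \is a GRing.unit by have := ord_unit _ np; rewrite o.
set N := p - c%:P.
have mN j : m N`_j.
  rewrite /N coefB coefC; case: j => [|j] /=; first by rewrite subrr; apply: m0.
  by rewrite subr0; apply: top_after; rewrite t.
have NN : N * N = 0.
  by apply/polyP => j; rewrite coef0 coefM big1 // => i _; apply: Hsq.
have CD : c%:P * c^-1%:P = 1 :> {poly R} by rewrite -polyCM mulrV.
have ep : p = c%:P + N by rewrite /N; ring.
exists (c^-1%:P * (1 - c^-1%:P * N)).
have -> : p * (c^-1%:P * (1 - c^-1%:P * N)) =
   c%:P * c^-1%:P * (1 - c^-1%:P * N) + c^-1%:P * N - c^-1%:P * c^-1%:P * (N * N).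
  by rewrite {1}ep; ring.
rewrite CD NN; ring.
Qed.

Lemma nnX : nn ('X : {poly R}) /\ ord 'X = 1%N.
Proof.
have u : isu ('X : {poly R})`_1 by rewrite coefX /isu unitr1.
split; first by apply/nnP; exists 1%N.
apply: ord_eq => // j; case: j => // _; rewrite coefX; exact: m0.
Qed.

Lemma irr_ord (p : {poly R}) : Defs.poly_irr p -> nn p -> ord p = top p -> (0 < ord p)%N.
Proof.
case=> nu _ np e; rewrite lt0n; apply/negP => /eqP o.
by apply: nu; apply: mono_unit => //; rewrite -e.
Qed.

Lemma irr_p0 (p : {poly R}) : Defs.poly_irr p -> nn p -> (2 <= ord p)%N -> p`_0 != 0.
Proof.
case=> nu irr np o2; apply/negP => /eqP p0.
set q := drop_poly 1 p.
have ep : p = q * 'X.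
  apply/polyP => j; rewrite coefMX coef_drop_poly; case: j => [|j] //=.
  by rewrite addn1.
have nq : nn q by case E: (nn q) => //; move: (null_mul _ 'X (negbT E)); rewrite -ep np.
case: nnX => nX oX.
case: (mul_ord _ _ nq nX); rewrite -ep oX => _ oq.
case: (irr _ _ ep) => /punit_ord [_ o].
- by move: o2; rewrite oq o.
- by rewrite o in oX.
Qed.

Lemma key (p Q : {poly R}) a b : nn p -> ord p = a -> p`_0 != 0 ->
  isu Q`_b -> (forall j, (j < b)%N -> m Q`_j) ->
  (forall j, (j + a <= b)%N -> Q`_j = 0) -> (p * Q)`_b != 0.
Proof.
move=> np o p0 uQ mQ zQ.
rewrite coefM (bigD1 ord0) //= subn0 big1 ?addr0.
  apply/negP => /eqP e; move/eqP: p0; apply.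
  by rewrite -(mulrK uQ p`_0) e mul0r.
move=> i ne; have ib := ltn_ord i; have i0 : (0 < i)%N.
  by rewrite lt0n; apply/negP => /eqP h; case/eqP: ne; apply: val_inj.
case: (ltnP i a) => h.
- apply: Hsq; first by apply: ord_before; rewrite o.
  apply: mQ; lia.
- by rewrite zQ ?mulr0 //; lia.
Qed.


Lemma final_contra (p Q : {poly R}) n : Defs.poly_irr p -> nn p -> nn Q ->
  (2 <= ord p)%N -> (forall j, (j + ord p <= ord Q)%N -> Q`_j = 0) ->
  (ord Q < n)%N -> 'X^n = p * Q -> False.
Proof.
move=> ip np nQ o2 z lt e.
have := key _ _ _ (ord Q) np erefl (irr_p0 _ ip np o2) (ord_unit _ nQ) (ord_before Q) z.
by rewrite -e coefXn (ltn_eqF lt) eqxx.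
Qed.

Lemma sum_le (s : seq {poly R}) (f g : {poly R} -> nat) :
  (forall x, x \in s -> (f x <= g x)%N) -> (\sum_(x <- s) f x <= \sum_(x <- s) g x)%N.
Proof.
elim: s => [|x s IH] h; first by rewrite !big_nil.
rewrite !big_cons; apply: leq_add; first by apply: h; rewrite inE eqxx.
by apply: IH => y ys; apply: h; rewrite inE ys orbT.
Qed.

Lemma sum_eq_le (s : seq {poly R}) (f g : {poly R} -> nat) :
  (forall x, x \in s -> (f x <= g x)%N) -> (\sum_(x <- s) f x = \sum_(x <- s) g x)%N ->
  forall x, x \in s -> f x = g x.
Proof.
elim: s => [|x s IH] h e y //.
have hx : (f x <= g x)%N by apply: h; rewrite inE eqxx.
have hs : forall y, y \in s -> (f y <= g y)%N by move=> z zs; apply: h; rewrite inE zs orbT.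
have le := sum_le _ _ _ hs.
move: e; rewrite !big_cons => e.
have e1 : f x = g x by lia.
have e2 : (\sum_(x <- s) f x = \sum_(x <- s) g x)%N by lia.
rewrite inE => /orP [/eqP -> // | ys]; exact: IH.
Qed.

Lemma facts (s : seq {poly R}) n : (forall p, p \in s -> Defs.poly_irr p) ->
  'X^n = \prod_(p <- s) p ->
  (forall p, p \in s -> nn p /\ (0 < ord p)%N) /\ (\sum_(p <- s) ord p)%N = n.
Proof.
move=> ir e.
have uX : isu ('X^n : {poly R})`_n by rewrite coefXn eqxx /isu unitr1.
have nX : nn ('X^n : {poly R}) by apply/nnP; exists n.
have oX : ord ('X^n : {poly R}) = n.
  by apply: ord_eq => // j lt; rewrite coefXn (ltn_eqF lt); apply: m0.
have tX : top ('X^n : {poly R}) = n.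
  by apply: top_eq => // j lt; rewrite coefXn (gtn_eqF lt); apply: m0.
have nall : forall p, p \in s -> nn p.
  move=> p ps; case E: (nn p) => //.
  by move: (prod_null _ _ ps (negbT E)); rewrite -e nX.
case: (prod_nn _ nall) => _ o t.
have le : forall p, p \in s -> (ord p <= top p)%N.
  by move=> p ps; apply: top_ge; apply: ord_unit; apply: nall.
have eq := sum_eq_le _ _ _ le.
have eqs : forall p, p \in s -> ord p = top p.
  by apply: eq; rewrite -o -t -e oX tX.
split; last by rewrite -o -e.
move=> p ps; split; first exact: nall.
by apply: irr_ord; [apply: ir | apply: nall | apply: eqs].
Qed.

Lemma lin_zero (r : seq {poly R}) : (forall q, q \in r -> nn q /\ ord q = 1%N) ->
  forall j, (j + 2 <= size r)%N -> (\prod_(q <- r) q)`_j = 0.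
Proof.
elim: r => [|q r IH] h j; first by rewrite /= addn2.
have hq : nn q /\ ord q = 1%N by apply: h; rewrite inE eqxx.
have hr : forall x, x \in r -> nn x /\ ord x = 1%N.
  by move=> x xs; apply: h; rewrite inE xs orbT.
have nr : forall x, x \in r -> nn x by move=> x /hr [].
case: (prod_nn _ nr) => nQ oQ _.
have oQ' : ord (\prod_(x <- r) x) = size r.
  rewrite oQ -sum1_size; apply: eq_big_seq => x /hr [] //.
move=> /= lt; rewrite big_cons coefM big1 // => i _.
case: (posnP i) => [i0|ip].
- rewrite i0 subn0; case: (leqP (j + 2) (size r)) => h2.
    by rewrite IH ?mulr0.
  apply: Hsq; first by apply: ord_before; case: hq => _ ->.
  by apply: ord_before; rewrite oQ'; lia.
- by rewrite IH ?mulr0 //; have := ltn_ord i; lia.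
Qed.

End Work.

Theorem lemma4p4 (R : comUnitRingType) (m : R -> Prop) :
  artinian R -> local_with_max m ->
  (exists x, m x /\ x <> 0) ->
  (forall x y, m x -> m y -> x * y = 0) ->
  forall n : nat, (0 < n)%N ->
    ~ is_length ('X^n : {poly R}) n.-1 /\
    (odd n -> ~ is_length ('X^n : {poly R}) 2).
Proof.
move=> _ [Hm _] _ Hsq n n0.
split.
- case=> k0 [s [sz ir e]].
  have [F S] := @facts R m Hm Hsq s n ir e.
  case: (boolP (has (fun p => 1 < ord R p)%N s)) => [/hasP [p ps p2] | nh].
  + set r := rem p s.
    have eP : 'X^n = p * \prod_(q <- r) q by rewrite e (big_rem _ ps).
    have eS : (ord R p + \sum_(q <- r) ord R q)%N = n by rewrite -S (big_rem _ ps).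
    have rs : forall q, q \in r -> q \in s by move=> q qr; apply: (mem_rem qr).
    have szr : size r = (size s).-1 by rewrite size_rem.
    have lb : (size r <= \sum_(q <- r) ord R q)%N.
      rewrite -sum1_size; apply: (@sum_le R) => q qr.
      by case: (F q (rs q qr)).
    have o2 : ord R p = 2%N by clearbody r; lia.
    have o1 : forall q, q \in r -> 1%N = ord R q.
      apply: (@sum_eq_le R r (fun _ => 1%N) (fun q => ord R q)).
        by move=> q qr; case: (F q (rs q qr)).
      have E1 : (\sum_(q <- r) ord R q = n - 2)%N by lia.
      have E2 : size r = (n - 2)%N by lia.
      by rewrite sum1_size E2 -E1.
    have nr : forall q, q \in r -> nn R q by move=> q qr; case: (F q (rs q qr)).
    have [nQ oQ _] := @prod_nn R m Hm Hsq r nr.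
    have oQ' : ord R (\prod_(q <- r) q) = size r.
      rewrite oQ -sum1_size; apply: eq_big_seq => x /o1 //.
    have ip : poly_irr p by apply: ir.
    have np : nn R p by case: (F p ps).
    have o2' : (1 < ord R p)%N by rewrite o2.
    have z : forall j, (j + ord R p <= ord R (\prod_(q <- r) q))%N -> (\prod_(q <- r) q)`_j = 0.
      move=> j; rewrite oQ' o2 => h; apply: (@lin_zero R m Hm Hsq) => //.
      by move=> q qr; split; [apply: nr | rewrite -o1].
    have lt : (ord R (\prod_(q <- r) q) < n)%N by rewrite oQ'; lia.
    exact: (@final_contra R m Hm Hsq p (\prod_(q <- r) q) n ip np nQ o2' z lt eP).
  + have : (\sum_(q <- s) ord R q <= \sum_(q <- s) 1)%N.
      apply: (@sum_le R) => q qs.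
      by move/hasPn: nh => /(_ q qs); rewrite -leqNgt.
    rewrite sum1_size S; lia.
- move=> on; case=> _ [s [sz ir e]].
  case: s sz ir e => [|p1 [|p2 [|? ?]]] //= _ ir e.
  have [F S] := @facts R m Hm Hsq _ n ir e.
  have e' : 'X^n = p1 * p2 by rewrite e !big_cons big_nil mulr1.
  move: S; rewrite !big_cons big_nil addn0 => S.
  have i1 : p1 \in [:: p1; p2] by rewrite inE eqxx.
  have i2 : p2 \in [:: p1; p2] by rewrite !inE eqxx orbT.
  case: (F _ i1) => n1 z1; case: (F _ i2) => n2 z2.
  case: (ltngtP (ord R p1) (ord R p2)) => [lt|gt|eq].
  + apply: (@final_contra R m Hm Hsq p2 p1 n) => //.
    * exact: ir.
    * lia.
    * move=> j h; lia.
    * lia.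
    * by rewrite mulrC.
  + apply: (@final_contra R m Hm Hsq p1 p2 n) => //.
    * exact: ir.
    * lia.
    * move=> j h; lia.
    * lia.
  + by move: on; rewrite -S eq addnn odd_double.
Qed.
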